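(* Let $\Omega=A_1\cup\dots\cup A_n$ be a disjoint union of $n$ nonempty sets, let $\mathcal B$ be the $\sigma$-algebra generated by $\{A_1,\dots,A_n\}$, and let $\mu$ be the positive measure on $(\Omega,\mathcal B)$ with $\mu(A_i)=a_i>0$ for $i=1,\dots,n$. Let $\mathcal R=\{v\in\{-1,0,1\}^n:\sum_{i=1}^n v_ia_i=0\}$. Then condition $(\mathcal L)$ uniquely determines $\mu$ (that is, every signed measure $\nu$ on $(\Omega,\mathcal B)$ satisfying $(\mathcal L)$ with respect to $\mu$ is of the form $\nu=\alpha\mu$ for some $\alpha\in\mathbb R$) if and only if the linear span of $\mathcal R$ in $\mathbb R^n$ has dimension $n-1$.
   Context: A signed measure $\nu$ satisfies condition $(\mathcal L)$ with respect to $\mu$ if for all $A,B\in\mathcal B$ with $\mu(A)=\mu(B)\neq\pm\infty$ one has $\nu(A)=\nu(B)\neq\pm\infty$. *)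

(* Defs.v *)
From HB Require Import structures.
From mathcomp Require Import all_boot all_order all_algebra.
From mathcomp Require Import all_classical all_reals all_analysis.
Set Implicit Arguments. Unset Strict Implicit. Unset Printing Implicit Defensive.
Import Order.TTheory GRing.Theory Num.Theory.
Import numFieldNormedType.Exports.
Local Open Scope classical_set_scope.
Local Open Scope ring_scope.

Definition condL d (T : measurableType d) (R : realType)
  (mu nu : set T -> \bar R) : Prop :=
  forall A B : set T, measurable A -> measurable B ->
    mu A = mu B -> (mu A != +oo)%E -> (mu A != -oo)%E ->
    [/\ nu A = nu B, (nu A != +oo)%E & (nu A != -oo)%E].

(* Encoding of {-1,0,1}: 0 |-> -1, 1 |-> 0, 2 |-> 1. *)
Definition trit (R : nzRingType) (k : 'I_3) : R := (k%:R - 1)%R.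

Definition trit_vectors (R : nzRingType) (n : nat) : seq 'rV[R]_n :=
  [seq \row_i trit R (f i) | f : {ffun 'I_n -> 'I_3}].

Definition relation_vectors (R : nzRingType) (n : nat) (a : 'I_n -> R)
  : seq 'rV[R]_n :=
  [seq v : 'rV[R]_n <- trit_vectors R n | \sum_(i < n) v ord0 i * a i == 0].

(* Main.v *)
Require Import Defs.
From HB Require Import structures.
From mathcomp Require Import all_boot all_order all_algebra.
From mathcomp Require Import all_classical all_reals all_analysis.
From mathcomp Require Import ring lra zify.
Import Order.TTheory GRing.Theory Num.Theory.
Import numFieldNormedType.Exports.
Local Open Scope classical_set_scope.
Local Open Scope ring_scope.
Set Implicit Arguments. Unset Strict Implicit. Unset Printing Implicit Defensive.

Lemma rank_crit (F : fieldType) (n m : nat) (M : 'M[F]_(m, n)) (ra : 'rV[F]_n) :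
  (0 < n)%N -> ra != 0 -> ra *m M^T = 0 ->
  (\rank M = n.-1) <-> (forall u : 'rV_n, u *m M^T = 0 -> exists al, u = al *: ra).
Proof.
move=> n0 ra0 raM.
have raK : (ra <= kermx M^T)%MS by apply/sub_kermxP.
have rK : \rank (kermx M^T) = (n - \rank M)%N by rewrite mxrank_ker mxrank_tr.
have r1 : \rank ra = 1%N by rewrite rank_rV ra0.
have rKge : (1 <= \rank (kermx M^T))%N by rewrite -r1 mxrankS.
have rM : (\rank M <= n)%N by exact: rank_leq_col.
split=> [rMn u uM|H].
- have Kra : (kermx M^T <= ra)%MS.
    rewrite -(mxrank_leqif_sup raK).2 rK r1; apply/eqP; lia.
  have : (u <= ra)%MS by apply: submx_trans Kra; apply/sub_kermxP.
  by case/sub_rVP => al ->; exists al.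
- have Kra : (kermx M^T <= ra)%MS.
    apply/row_subP => i.
    have /H [al ->] : row i (kermx M^T) *m M^T = 0.
      by apply/sub_kermxP; rewrite row_sub.
    by apply/sub_rVP; exists al.
  have := mxrankS Kra; rewrite r1 => h; lia.
Qed.

Lemma dim_span_rank (F : fieldType) (n : nat) (X : seq 'rV[F]_n) :
  \dim <<X>>%VS = \rank (\matrix_(k < size X) nth 0 X k).
Proof.
rewrite unlock /dimv /= genmxE.
pose L := VectorInternalTheory.VectorInternalTheory_v2r__canonical__GRing_Linear 'rV[F]_n.
pose P := lin1_mx L.
have -> : VectorInternalTheory.b2mx (in_tuple X) = (\matrix_(k < size X) nth 0 X k) *m P.
  apply/row_matrixP => i; rewrite row_mul !rowK /P mul_rV_lin1 (tnth_nth 0).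
  by [].
apply: mxrankMfree; rewrite -kermx_eq0; apply/eqP/row_matrixP => i.
rewrite row0; apply: (@VectorInternalTheory.v2r_inj F 'rV[F]_n).
have L0 : VectorInternalTheory.v2r (0 : 'rV[F]_n) = 0 := linear0 L.
rewrite L0.
have -> : VectorInternalTheory.v2r (row i (kermx P)) = row i (kermx P) *m P by rewrite /P mul_rV_lin1.
apply/eqP; rewrite -sub_kermx.
exact: row_sub.
Qed.

Section helpers.
Variables (R : realType) (n : nat) (T : pointedType) (A : 'I_n -> set T).
Local Notation T' := (g_sigma_algebraType (range A)).
Hypothesis A_disjoint : forall i j, i != j -> A i `&` A j = set0.
Hypothesis A_cover : \bigcup_i A i = setT.

Lemma atoms (S : set T') : measurable S -> forall i, A i `<=` S \/ A i `&` S = set0.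
Proof.
move=> mS i; apply: (mS [set S | forall i, A i `<=` S \/ A i `&` S = set0]).
split.
- split.
  + by move=> j; right; rewrite setI0.
  + move=> S0 HS j; case: (HS j) => h.
    * right; apply/seteqP; split => x // [Ax [_ nSx]]; exact: nSx (h _ Ax).
    * left => x Ax; split => // S0x.
      by have : (A j `&` S0) x by []; rewrite h.
  + move=> F HF j; case: (pselect (exists k, A j `<=` F k)) => [[k hk]|nk].
    * by left => x Ax; exists k => //; exact: hk.
    * right; apply/seteqP; split => x // [Ax [k _ Fkx]].
      case: (HF k j) => h; first by apply: nk; exists k.
      by have : (A j `&` F k) x by []; rewrite h.
- move=> _ [j _ <-] i'; case: (eqVneq i' j) => [->|nij]; first by left.
  by right; exact: A_disjoint.
Qed.

Lemma measA i : measurable (A i : set T').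
Proof. by apply: sub_sigma_algebra; exists i. Qed.


Lemma memU (r : seq 'I_n) (P : pred 'I_n) (y : T) :
  (\big[setU/set0]_(i <- r | P i) A i) y <-> exists2 i, (i \in r) && P i & A i y.
Proof.
elim: r => [|j r IH]; first by rewrite big_nil; split => // -[].
rewrite big_cons; case: ifP => Pj; split.
- case=> [Ajy|/IH [i /andP[ir Pi] Aiy]]; first by exists j; rewrite ?inE ?eqxx ?Pj.
  by exists i => //; rewrite inE ir orbT.
- move=> [i /andP[]]; rewrite inE => /orP[/eqP->|ir] Pi Aiy; first by left.
  by right; apply/IH; exists i; rewrite ?ir ?Pi.
- by move/IH => [i /andP[ir Pi] Aiy]; exists i; rewrite ?inE ?ir ?orbT.
- move=> [i /andP[]]; rewrite inE => /orP[/eqP->|ir] Pi Aiy; first by rewrite Pj in Pi.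
  by apply/IH; exists i; rewrite ?ir ?Pi.
Qed.

Lemma additive_bigU (f : set T' -> \bar R) : f set0 = 0%E ->
  (forall X Y : set T', measurable X -> measurable Y -> X `&` Y = set0 ->
     f (X `|` Y) = (f X + f Y)%E) ->
  forall (P : pred 'I_n), f (\big[setU/set0]_(i | P i) A i) = (\sum_(i | P i) f (A i))%E.
Proof.
move=> f0 fadd P.
suff : forall r, uniq r -> f (\big[setU/set0]_(i <- r | P i) A i) = (\sum_(i <- r | P i) f (A i))%E.
  by apply; exact: index_enum_uniq.
elim=> [|j r IH]; first by rewrite !big_nil.
rewrite cons_uniq => /andP[jr ur]; rewrite !big_cons; case: ifP => Pj; last exact: IH.
rewrite fadd ?IH //; first exact: measA.
  by apply: bigsetU_measurable => i _; exact: measA.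
apply/seteqP; split => y // [Ajy /memU [i /andP[ir Pi] Aiy]].
have ij : j != i by apply: contraNneq jr => ->.
by have : (A j `&` A i) y by []; rewrite A_disjoint.
Qed.

Variable x : 'I_n -> T.
Hypothesis xA : forall i, A i (x i).

Lemma atomsx (S : set T') : measurable S -> forall i, A i `<=` S <-> S (x i).
Proof.
move=> mS i; split; first by apply; exact: xA.
move=> Sx; case: (atoms mS i) => // h.
have : (A i `&` S) (x i) by split => //; exact: xA.
by rewrite h.
Qed.

Lemma decomp (S : set T') : measurable S ->
  S = \big[setU/set0]_(i | `[< S (x i) >]) A i.
Proof.
move=> mS; apply/seteqP; split => y.
- move=> Sy; have : (\bigcup_i A i) y by rewrite A_cover.
  case=> i _ Aiy; apply/memU; exists i => //.
  rewrite mem_index_enum /=; apply/asboolP; apply/(atomsx mS).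
  case: (atoms mS i) => // h.
  by have : (A i `&` S) y by []; rewrite h.
- move/memU => [i /andP[_ /asboolP Sxi] Aiy].
  by apply: (proj2 (atomsx mS i) Sxi).
Qed.

Definition nub (b : 'I_n -> R) (r : seq 'I_n) : {charge set T' -> \bar R} :=
  foldr (fun i acc => [the {charge set T' -> \bar R} of
     cadd (cscale (b i) (charge_of_finite_measure (@dirac _ T' (x i) R))) acc])
    [the {charge set T' -> \bar R} of czero] r.

Lemma nubE b r (S : set T') : nub b r S = (\sum_(i <- r) b i * (`[< S (x i) >])%:R)%:E.
Proof.
elim: r => [|i r IH]; first by rewrite big_nil.
rewrite big_cons /= /cadd /= IH /cscale.
rewrite [X in (_ * X)%E](_ : _ = (`[< S (x i) >]%:R)%:E); last exact: diracE.
by rewrite -EFinM -EFinD.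
Qed.
End helpers.

Lemma sum_pred (R : realType) (n : nat) (P : pred 'I_n) (g : 'I_n -> R) :
  \sum_(i | P i) g i = \sum_i (P i)%:R * g i.
Proof. by rewrite big_mkcond; apply: eq_bigr => i _; case: (P i); rewrite ?mul1r ?mul0r. Qed.

Unset Implicit Arguments.
Set Strict Implicit.

Theorem proposition4p1 (R : realType) (n : nat) (T : pointedType)
  (A : 'I_n -> set T) (a : 'I_n -> R)
  (n_gt0 : (0 < n)%N)
  (A_nonempty : forall i, A i !=set0)
  (A_disjoint : forall i j, i != j -> A i `&` A j = set0)
  (A_cover : \bigcup_i A i = setT)
  (mu : {measure set (g_sigma_algebraType (range A)) -> \bar R})
  (a_pos : forall i, 0 < a i)
  (mu_A : forall i, mu (A i) = (a i)%:E) :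
  (forall nu : {charge set (g_sigma_algebraType (range A)) -> \bar R},
     condL mu nu ->
     exists alpha : R, forall S : set (g_sigma_algebraType (range A)),
       measurable S -> nu S = (alpha%:E * mu S)%E)
  <->
  \dim <<relation_vectors a>>%VS = n.-1.
Proof.
have [x xA] := choice A_nonempty.
set sv := relation_vectors a.
set M := \matrix_(k < size sv) nth 0 sv k.
set ra := \row_i a i.
have raNZ : ra != 0.
  apply/eqP => /rowP /(_ (Ordinal n_gt0)); rewrite !mxE => a0.
  by have := a_pos (Ordinal n_gt0); rewrite a0 ltxx.
have entry (u : 'rV[R]_n) k : (u *m M^T) 0 k = \sum_j u 0 j * (nth 0 sv k) 0 j.
  by rewrite !mxE; apply: eq_bigr => j _; rewrite !mxE.
have raM : ra *m M^T = 0.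
  apply/rowP => k; rewrite entry [RHS]mxE.
  have : nth 0 sv k \in sv by apply: mem_nth.
  rewrite mem_filter => /andP[/eqP h _]; rewrite -[RHS]h.
  by apply: eq_bigr => j _; rewrite mxE mulrC.
rewrite dim_span_rank (rank_crit n_gt0 raNZ raM).
pose T' := g_sigma_algebraType (range A).
have fsum (f : set T' -> \bar R) : f set0 = 0%E ->
    (forall X Y : set T', measurable X -> measurable Y -> X `&` Y = set0 ->
     f (X `|` Y) = (f X + f Y)%E) ->
    forall S : set T', measurable S -> f S = (\sum_(i | `[< S (x i) >]) f (A i))%E.
  move=> f0 fadd S mS; rewrite {1}(decomp A_disjoint A_cover xA mS).
  exact: additive_bigU.
have muS (S : set T') : measurable S -> mu S = (\sum_(i | `[< S (x i) >]) a i)%:E.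
  move=> mS; rewrite (fsum _ (measure0 mu) (measureU mu)) // -sumEFin.
  by apply: eq_bigr => i _; exact: mu_A.
split.
- move=> H u uM.
  pose nu := nub A x (fun i => u 0 i) (index_enum 'I_n).
  have nuE (S : set T') : nu S = (\sum_i u 0 i * `[< S (x i) >]%:R)%:E by rewrite nubE.
  have cL : condL mu nu.
    move=> S1 S2 m1 m2 e _ _; rewrite !nuE; split => //; congr EFin.
    rewrite !muS // in e; have {}e := EFin_inj e.
    pose p1 i := `[< S1 (x i) >]. pose p2 i := `[< S2 (x i) >].
    pose f := [ffun i => inord (if p1 i then (if p2 i then 1 else 2) else (if p2 i then 0 else 1))%N : 'I_3].
    pose v := \row_i trit R (f i).
    have vi i : v 0 i = (p1 i)%:R - (p2 i)%:R.
      rewrite mxE ffunE /trit; case: (p1 i); case: (p2 i); rewrite inordK //=.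
      all: rewrite ?subr0 ?subrr //.
      by rewrite -[2%N]/(1+1)%N natrD addrK.
    have vin : v \in sv.
      rewrite mem_filter; apply/andP; split.
        apply/eqP; under eq_bigr do rewrite vi mulrBl.
        by rewrite sumrB -(sum_pred p1) -(sum_pred p2) e subrr.
      by apply/mapP; exists f => //; rewrite mem_enum.
    have kk : (index v sv < size sv)%N by rewrite index_mem.
    have := congr1 (fun m : 'M[R]_(1, size sv) => m 0 (Ordinal kk)) uM; rewrite entry mxE /= nth_index // => hz.
    apply/eqP; rewrite -subr_eq0 -sumrB; apply/eqP; rewrite -[RHS]hz.
    by apply: eq_bigr => j _; rewrite vi mulrBr.
  have [al Hal] := H nu cL.
  exists al; apply/rowP => j; rewrite !mxE.
  have h := Hal (A j) (measA j).
  have h2 : mu (A j) = (a j)%:E by exact: mu_A.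
  rewrite (nuE (A j)) h2 in h.
  have h3 : \sum_i u 0 i * `[< A j (x i) >]%:R = al * a j.
    by apply: EFin_inj; rewrite EFinM; exact: h.
  rewrite -h3.
  rewrite (bigD1 j) //= asboolT // mulr1 big1 ?addr0 // => i ij.
  rewrite asboolF ?mulr0 // => Ajxi.
  have : (A i `&` A j) (x i) by split.
  by rewrite A_disjoint.
- move=> H nu cL.
  pose u := \row_i fine (nu (A i)).
  have nuA i : nu (A i) = (u 0 i)%:E.
    by rewrite mxE fineK //; apply: fin_num_measure; exact: measA.
  have nuS (S : set T') : measurable S -> nu S = (\sum_(i | `[< S (x i) >]) u 0 i)%:E.
    move=> mS; rewrite (fsum _ (charge0 nu) (chargeU nu)) // -sumEFin.
    by apply: eq_bigr => i _; exact: nuA.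
  have uM : u *m M^T = 0.
    apply/rowP => k; rewrite entry [RHS]mxE.
    have : nth 0 sv k \in sv by apply: mem_nth.
    rewrite mem_filter => /andP[/eqP h /mapP [f _ vE]].
    pose P2 i := (val (f i) == 2%N).
    pose P0 i := (val (f i) == 0%N).
    have vi i : nth 0 sv k 0 i = (P2 i)%:R - (P0 i)%:R.
      rewrite vE mxE /trit /P2 /P0; case: (f i) => -[|[|[|m]]] hm //=.
      all: rewrite ?subr0 ?subrr ?sub0r //.
      by rewrite -[2%N]/(1+1)%N natrD addrK.
    pose S2 : set T' := \big[setU/set0]_(i | P2 i) A i.
    pose S0 : set T' := \big[setU/set0]_(i | P0 i) A i.
    have mS2 : measurable S2 by apply: bigsetU_measurable => i _; exact: measA.
    have mS0 : measurable S0 by apply: bigsetU_measurable => i _; exact: measA.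
    have muU (P : pred 'I_n) : mu (\big[setU/set0]_(i | P i) A i) = (\sum_(i | P i) a i)%:E.
      rewrite (additive_bigU A_disjoint (measure0 mu) (measureU mu)) -sumEFin.
      by apply: eq_bigr => i _; exact: mu_A.
    have nuU (P : pred 'I_n) : nu (\big[setU/set0]_(i | P i) A i) = (\sum_(i | P i) u 0 i)%:E.
      rewrite (additive_bigU A_disjoint (charge0 nu) (chargeU nu)) -sumEFin.
      by apply: eq_bigr => i _; exact: nuA.
    have ea : \sum_(i | P2 i) a i = \sum_(i | P0 i) a i.
      apply/eqP; rewrite -subr_eq0 (sum_pred P2) (sum_pred P0) -sumrB -[X in _ == X]h.
      by apply/eqP/eq_bigr => i _; rewrite vi mulrBl.
    have [e2 _ _] := cL S2 S0 mS2 mS0 ltac:(by rewrite /S2 /S0 !muU ea)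
      ltac:(by rewrite /S2 muU) ltac:(by rewrite /S2 muU).
    rewrite /S2 /S0 !nuU in e2; have e3 := EFin_inj e2.
    rewrite (sum_pred P2) (sum_pred P0) in e3; move/eqP: e3.
    rewrite -subr_eq0 -sumrB => /eqP e4; rewrite -[RHS]e4.
    by apply: eq_bigr => i _; rewrite vi mulrBr [u 0 i * _]mulrC [u 0 i * _]mulrC.
  have [al uE] := H u uM.
  exists al => S mS; rewrite nuS // muS // -EFinM; congr EFin.
  rewrite mulr_sumr; apply: eq_bigr => i _.
  by rewrite uE !mxE.
Qed.
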